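(* Let $G$ be a graph on $V$, $W\subseteq V$ reducible in $G$, and $v,w\in V\setminus W$ (possibly $v=w$). Then $v$ and $w$ are joined by an edge in $\Gamma_W(G)$ if and only if $\operatorname{rank}_G(W\cup\{v\},W\cup\{w\})>\operatorname{rank}_G(W)$. If moreover the principal submatrix of the adjacency matrix $A$ on $W$ is nonsingular, this holds if and only if $\det\big(A_{W\cup\{v\},\,W\cup\{w\}}\big)\neq 0$ over $\mathbf F_2$.
   Context: A graph means a finite simple graph in which loops are allowed, with adjacency matrix $A$ over $\mathbf F_2$ ($A_{vv}=1$ iff $v$ has a loop). Let $\mathcal V$ be the $\mathbf F_2$-vector space with basis $V$ and $\mathcal E(x,y)=x^TAy$. For $W\subseteq V$, $\langle W\rangle$ is the span of $W$ and $\langle W\rangle^{\perp\mathcal E}=\{x:\mathcal E(x,w)=0\ \forall w\in\langle W\rangle\}$. $W$ is reducible in $G$ if $\langle W\rangle+\langle W\rangle^{\perp\mathcal E}=\mathcal V$. For reducible $W$, $\mathcal E^W(x_1,x_2)=\mathcal E(x_1',x_2')$ where $x_i'\in\langle W\rangle^{\perp\mathcal E}$ with $x_i-x_i'\in\langle W\rangle$, and $\Gamma_W(G)$ is the graph on $V\setminus W$ in which $v,w$ (possibly equal) are joined iff $\mathcal E^W(v,w)=1$. $\operatorname{rank}_G(W_1,W_2)$ denotes the $\mathbf F_2$-rank of the submatrix of $A$ with rows $W_1$ and columns $W_2$, and $\operatorname{rank}_G(W)=\operatorname{rank}_G(W,W)$; $A_{X,Y}$ is the submatrix with rows $X$, columns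 $Y$. *)

(* Defs.v *)
From HB Require Import structures.
From mathcomp Require Import all_boot all_order all_algebra.
Set Implicit Arguments. Unset Strict Implicit. Unset Printing Implicit Defensive.
Import GRing.Theory.
Local Open Scope ring_scope.

(* A graph (loops allowed) on 'I_n is a symmetric relation e; e v v = loop. *)
Definition adjmx (n : nat) (e : rel 'I_n) : 'M['F_2]_n :=
  \matrix_(i, j) (e i j)%:R.

Definition formE n (e : rel 'I_n) (x y : 'rV['F_2]_n) : 'F_2 :=
  (x *m adjmx e *m y^T) 0 0.

Definition bvec n (v : 'I_n) : 'rV['F_2]_n := delta_mx 0 v.

Definition spanmx n (W : {set 'I_n}) : 'M['F_2]_n :=
  \matrix_(i < n) (if i \in W then bvec i else 0).

Definition in_span n (W : {set 'I_n}) (x : 'rV['F_2]_n) : bool :=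
  (x <= spanmx W)%MS.

Definition in_perp n (e : rel 'I_n) (W : {set 'I_n}) (x : 'rV['F_2]_n) : bool :=
  [forall y : 'rV['F_2]_n, in_span W y ==> (formE e x y == 0)].

Definition reducible n (e : rel 'I_n) (W : {set 'I_n}) : Prop :=
  forall x : 'rV['F_2]_n, exists a b : 'rV['F_2]_n,
    [/\ in_span W a, in_perp e W b & x = a + b].

(* x' in <W>^{perp E} with x - x' in <W> (chosen; unique up to the
   well-definedness of E^W for reducible W) *)
Definition perp_part n (e : rel 'I_n) (W : {set 'I_n}) (x : 'rV['F_2]_n)
  : 'rV['F_2]_n :=
  odflt 0 [pick y : 'rV['F_2]_n | in_perp e W y && in_span W (x - y)].

Definition formEW n (e : rel 'I_n) (W : {set 'I_n}) (x1 x2 : 'rV['F_2]_n)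
  : 'F_2 := formE e (perp_part e W x1) (perp_part e W x2).

Definition gammaW_edge n (e : rel 'I_n) (W : {set 'I_n}) (v w : 'I_n) : bool :=
  [&& v \notin W, w \notin W & formEW e W (bvec v) (bvec w) == 1].

Definition submxG n (e : rel 'I_n) (X Y : {set 'I_n}) : 'M['F_2]_(#|X|, #|Y|) :=
  \matrix_(i < #|X|, j < #|Y|) adjmx e (enum_val i) (enum_val j).

Definition rankG n (e : rel 'I_n) (X Y : {set 'I_n}) : nat := \rank (submxG e X Y).

(* Square submatrix A_{X,Y}, meaningful when #|X| = #|Y|: rows are the
   elements of X, columns the elements of Y (both in enum order). *)
Definition sqsubmxG n (e : rel 'I_n) (X Y : {set 'I_n}) : 'M['F_2]_#|X| :=
  \matrix_(i < #|X|, j < #|X|)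
    adjmx e (enum_val i) (nth (enum_val i) (enum Y) j).

(* Main.v *)
Require Import Defs.
From HB Require Import structures.
From mathcomp Require Import all_boot all_order all_algebra.
Import GRing.Theory.
Local Open Scope ring_scope.
Set Implicit Arguments. Unset Strict Implicit.


Definition selmx m n (f : 'I_m -> 'I_n) : 'M['F_2]_(m, n) :=
  \matrix_(i, j) (f i == j)%:R.

Lemma selmxM m n p (f : 'I_m -> 'I_n) (B : 'M['F_2]_(n, p)) i j :
  (selmx f *m B) i j = B (f i) j.
Proof.
rewrite !mxE (bigD1 (f i)) //= mxE eqxx mul1r big1 ?addr0 // => k nk.
by rewrite mxE eq_sym (negbTE nk) mul0r.
Qed.

Lemma mxselT m n p (f : 'I_m -> 'I_n) (B : 'M['F_2]_(p, n)) i j :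
  (B *m (selmx f)^T) i j = B i (f j).
Proof.
rewrite !mxE (bigD1 (f j)) //= !mxE eqxx mulr1 big1 ?addr0 // => k nk.
by rewrite !mxE eq_sym (negbTE nk) mulr0.
Qed.

Lemma selmx_inj m n (f : 'I_m -> 'I_n) : injective f ->
  selmx f *m (selmx f)^T = 1%:M.
Proof.
move=> fi; apply/matrixP=> i j; rewrite mxselT !mxE.
by rewrite (inj_eq fi).
Qed.

Lemma spanmxE n (W : {set 'I_n}) i j :
  spanmx W i j = ((i \in W) && (i == j))%:R.
Proof.
rewrite /spanmx mxE; case: ifP => _ /=; last by rewrite mxE.
by rewrite /bvec mxE eqxx eq_sym.
Qed.

Lemma selmx_img m n (f : 'I_m -> 'I_n) (X : {set 'I_n}) : injective f ->
  (forall i, f i \in X) -> (forall k, k \in X -> exists i, f i = k) ->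
  (selmx f)^T *m selmx f = spanmx X.
Proof.
move=> fi fX fs; apply/matrixP=> k l; rewrite spanmxE !mxE.
case kX: (k \in X) => /=.
  have [i0 <-] := fs k kX.
  rewrite (bigD1 i0) //= !mxE eqxx mul1r big1 ?addr0 // => i ni.
  by rewrite !mxE (inj_eq fi) (negbTE ni) mul0r.
rewrite big1 // => i _; rewrite !mxE.
have: f i != k by apply: contraFneq kX => <-.
by move/negbTE => ->; rewrite mul0r.
Qed.

Lemma rank_sel k m n (S : 'M['F_2]_(k, n)) (T : 'M['F_2]_(m, n)) (A : 'M['F_2]_n) :
  S *m S^T = 1%:M -> T *m T^T = 1%:M ->
  \rank (S *m A *m T^T) = \rank (S^T *m S *m A *m (T^T *m T)).
Proof.
move=> hS hT; apply/eqP; rewrite eqn_leq; apply/andP; split.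
  have -> : S *m A *m T^T = S *m (S^T *m S *m A *m (T^T *m T)) *m T^T.
    by rewrite !mulmxA hS mul1mx -!mulmxA hT mulmx1.
  by apply: leq_trans (mxrankM_maxl _ _) _; apply: mxrankM_maxr.
have -> : S^T *m S *m A *m (T^T *m T) = S^T *m (S *m A *m T^T) *m T.
  by rewrite !mulmxA.
by apply: leq_trans (mxrankM_maxl _ _) _; apply: mxrankM_maxr.
Qed.

Lemma sel_enum_inj n (X : {set 'I_n}) :
  selmx (fun i : 'I_#|X| => enum_val i) *m (selmx (fun i : 'I_#|X| => enum_val i))^T = 1%:M.
Proof. by apply: selmx_inj; apply: enum_val_inj. Qed.

Lemma sel_enum_img n (X : {set 'I_n}) :
  (selmx (fun i : 'I_#|X| => enum_val i))^T *m selmx (fun i : 'I_#|X| => enum_val i) = spanmx X.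
Proof.
apply: selmx_img; first exact: enum_val_inj.
  by move=> i; apply: enum_valP.
by move=> k kX; exists (enum_rank_in kX k); rewrite enum_rankK_in.
Qed.

Lemma submxG_sel n (e : rel 'I_n) (X Y : {set 'I_n}) :
  submxG e X Y = selmx (fun i : 'I_#|X| => enum_val i) *m adjmx e
                   *m (selmx (fun i : 'I_#|Y| => enum_val i))^T.
Proof. by apply/matrixP=> i j; rewrite mxselT selmxM mxE. Qed.

Lemma rankG_span n (e : rel 'I_n) (X Y : {set 'I_n}) :
  rankG e X Y = \rank (spanmx X *m adjmx e *m spanmx Y).
Proof.
by rewrite /rankG submxG_sel rank_sel ?sel_enum_inj // !sel_enum_img.
Qed.

Lemma sqsubmxG_sel n (e : rel 'I_n) (X Y : {set 'I_n}) (H : #|X| = #|Y|) :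
  sqsubmxG e X Y = selmx (fun i : 'I_#|X| => enum_val i) *m adjmx e
                   *m (selmx (fun i : 'I_#|X| => enum_val (cast_ord H i)))^T.
Proof.
apply/matrixP=> i j; rewrite mxselT selmxM !mxE /enum_val /=.
congr ((e _ _)%:R); apply: set_nth_default.
by rewrite -cardE -H.
Qed.

Lemma rank_sqsub n (e : rel 'I_n) (X Y : {set 'I_n}) (H : #|X| = #|Y|) :
  \rank (sqsubmxG e X Y) = \rank (spanmx X *m adjmx e *m spanmx Y).
Proof.
rewrite sqsubmxG_sel rank_sel ?sel_enum_inj //; last first.
  by apply: selmx_inj => i j /enum_val_inj /cast_ord_inj.
rewrite sel_enum_img; congr (\rank (_ *m _ *m _)).
apply: selmx_img.
- by move=> i j /enum_val_inj /cast_ord_inj.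
- by move=> i; apply: enum_valP.
move=> k kX; exists (cast_ord (esym H) (enum_rank_in kX k)).
by rewrite cast_ordKV enum_rankK_in.
Qed.
Lemma rank_inv n (L L' R R' M : 'M['F_2]_n) :
  L' *m L = 1%:M -> R *m R' = 1%:M -> \rank (L *m M *m R) = \rank M.
Proof.
move=> hL hR; apply/eqP; rewrite eqn_leq; apply/andP; split.
  by apply: leq_trans (mxrankM_maxl _ _) _; apply: mxrankM_maxr.
have eM : M = L' *m (L *m M *m R) *m R'.
  by rewrite !mulmxA hL mul1mx -!mulmxA hR mulmx1.
rewrite {1}eM.
by apply: leq_trans (mxrankM_maxl _ _) _; apply: mxrankM_maxr.
Qed.

Lemma keyM n (A P : 'M['F_2]_n) (u z a b : 'rV['F_2]_n) :
  A^T = A -> P^T = P -> P *m P = P -> u *m P = 0 -> z *m P = 0 ->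
  a *m P = a -> b *m P = b ->
  (u - a) *m A *m P = 0 -> (z - b) *m A *m P = 0 ->
  \rank (((P + u^T *m u) *m A *m (P + z^T *m z))%R)
  = \rank ((P *m A *m P + ((u - a) *m A *m (z - b)^T) 0 0 *: (u^T *m z))%R).
Proof.
move=> hA hP hPP hu hz ha hb hx hy.
have f1 : P *m u^T = 0 by rewrite -[P]hP -trmx_mul hu trmx0.
have f2 : P *m z^T = 0 by rewrite -[P]hP -trmx_mul hz trmx0.
have f3 : a *m u^T = 0 by rewrite -ha -mulmxA f1 mulmx0.
have f4 : z *m b^T = 0.
  by rewrite -[z *m _]trmxK trmx_mul trmxK -hb -mulmxA f2 mulmx0 trmx0.
have f5 : P *m b^T = b^T by rewrite -[P]hP -trmx_mul hb.
have f6 : P *m A *m (z - b)^T = 0.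
  by rewrite -[P]hP -hA -!trmx_mul mulmxA hy trmx0.
have f7 : (u - a) *m A *m b^T = 0 by rewrite -f5 mulmxA hx mul0mx.
set c := (u - a) *m A *m z^T.
have hc : ((u - a) *m A *m (z - b)^T) 0 0 = c 0 0.
  by rewrite linearB /= mulmxBr f7 oppr0 addr0.
rewrite hc.
pose L : 'M['F_2]_n := 1%:M - u^T *m a.
pose R : 'M['F_2]_n := 1%:M - b^T *m z.
have hL : (1%:M + u^T *m a) *m L = 1%:M.
  rewrite /L mulmxBr mulmx1 mulmxDl mul1mx -mulmxA (mulmxA a) f3 mul0mx mulmx0.
  by rewrite addr0 addrK.
have hR : R *m (1%:M + b^T *m z) = 1%:M.
  rewrite /R mulmxBl mul1mx mulmxDr mulmx1 -mulmxA (mulmxA z) f4 mul0mx mulmx0.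
  by rewrite addr0 addrK.

rewrite -(rank_inv _ hL hR).
congr (\rank _).
set PY := P + z^T *m z.
have haX : a *m (P + u^T *m u) = a by rewrite mulmxDr ha mulmxA f3 mul0mx addr0.
have step1 : L *m ((P + u^T *m u) *m A *m PY)
   = P *m A *m PY + u^T *m ((u - a) *m A *m PY).
  rewrite /L mulmxBl mul1mx !mulmxA -(mulmxA _ a) haX mulmxDl !mulmxDl.
  rewrite -addrA; congr (_ + _).
  by rewrite mulmxBr !mulmxBl.
rewrite step1.
have step2 : (u - a) *m A *m PY = c *m z.
  by rewrite /PY mulmxDr hx add0r !mulmxA.
rewrite step2.
rewrite /R mulmxBr mulmx1 /PY.
have e1 : (P *m A *m (P + z^T *m z)) *m (b^T *m z) = P *m A *m b^T *m z.
  rewrite -!mulmxA (mulmxA (P + _)) mulmxDl f5 -[z^T *m z *m b^T]mulmxA f4.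
  by rewrite mulmx0 addr0 !mulmxA.
have e2 : u^T *m (c *m z) *m (b^T *m z) = 0.
  by rewrite -!mulmxA (mulmxA z) f4 mul0mx !mulmx0.
rewrite mulmxDl e1 e2 addr0 mulmxDr.
have e3 : P *m A *m (z^T *m z) - P *m A *m b^T *m z = 0.
  have : P *m A *m ((z - b)^T *m z) = 0 by rewrite mulmxA f6 mul0mx.
  rewrite linearB /= mulmxBl mulmxBr !mulmxA; exact: id.
have gen : forall X Y Z V : 'M['F_2]_n, X + Y + Z - V = X + Z + (Y - V).
  by move=> X Y Z V; rewrite -!addrA (addrCA Y).
rewrite gen e3 addr0; congr (_ + _).
by rewrite {1}[c]mx11_scalar mul_scalar_mx scalemxAr.
Qed.

Lemma rankKD n (K P : 'M['F_2]_n) (v w : 'I_n) :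
  K *m P = K -> P *m K = K -> delta_mx v w *m P = 0 -> P *m delta_mx v w = 0 ->
  delta_mx v v *m K = 0 ->
  \rank ((K + delta_mx v w)%R) = (\rank K).+1.
Proof.
move=> hKP hPK hDP hPD hQK.
set D := delta_mx v w.
have e1 : P *m (K + D) = K by rewrite mulmxDr hPK hPD addr0.
have e2 : delta_mx v v *m (K + D) = D by rewrite mulmxDr hQK add0r mul_delta_mx.
have s1 : (K <= (K + D)%R)%MS by rewrite -{1}e1; apply: submxMl.
have s2 : (D <= (K + D)%R)%MS by rewrite -{1}e2; apply: submxMl.
have s3 : ((K + D)%R <= (K + D)%MS)%MS by apply: addmx_sub_adds.
have s4 : ((K + D)%MS <= (K + D)%R)%MS by rewrite addsmx_sub s1 s2.
have -> : \rank ((K + D)%R) = \rank ((K + D)%MS).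
  by apply/eqP; rewrite eqn_leq !mxrankS.
rewrite mxrank_disjoint_sum ?mxrank_delta ?addn1 //.
set Z := (K :&: D)%MS.
have [X hX] : exists X, Z = X *m K by apply/submxP; apply: capmxSl.
have [Y hY] : exists Y, Z = Y *m D by apply/submxP; apply: capmxSr.
have h1 : Z *m P = Z by rewrite {1}hX -mulmxA hKP -hX.
by rewrite -h1 {1}hY -mulmxA hDP mulmx0.
Qed.

Lemma F2c (c : 'F_2) : c = 0 \/ c = 1.
Proof. by case: c => [[|[|k]] //= Hk]; [left|right]; apply: val_inj. Qed.

Lemma adjmx_tr n (e : rel 'I_n) : symmetric e -> (adjmx e)^T = adjmx e.
Proof. by move=> He; apply/matrixP=> i j; rewrite !mxE He. Qed.

Lemma spanmx_tr n (W : {set 'I_n}) : (spanmx W)^T = spanmx W.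
Proof.
apply/matrixP=> i j; rewrite mxE !spanmxE.
by case: (eqVneq i j) => [->|h] //; rewrite !andbF.
Qed.

Lemma spanmx_idem n (W : {set 'I_n}) : spanmx W *m spanmx W = spanmx W.
Proof.
by rewrite -sel_enum_img mulmxA -(mulmxA _ _ (_^T)) sel_enum_inj mulmx1.
Qed.

Lemma bvec_notin n (W : {set 'I_n}) v : v \notin W -> bvec v *m spanmx W = 0.
Proof.
move=> Hv; apply/matrixP=> i j; rewrite (ord1 i) /bvec -rowE [RHS]mxE mxE spanmxE.
by rewrite (negbTE Hv).
Qed.

Lemma spanmxU1 n (W : {set 'I_n}) v : v \notin W ->
  spanmx (v |: W) = spanmx W + (bvec v)^T *m bvec v.
Proof.
move=> Hv; rewrite /bvec trmx_delta mul_delta_mx.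
apply/matrixP=> i j; rewrite spanmxE mxE spanmxE mxE in_setU1.
case: (eqVneq i v) => [->|hi] /=; first by rewrite (negbTE Hv) add0r eq_sym.
by rewrite addr0.
Qed.

Lemma rowv_entry n (M : 'rV['F_2]_n) j : (M *m (bvec j)^T) 0 0 = M 0 j.
Proof. by rewrite /bvec trmx_delta -colE mxE. Qed.

Lemma in_span_P n (W : {set 'I_n}) a : in_span W a -> a *m spanmx W = a.
Proof. by move/submxP=> [D ->]; rewrite -mulmxA spanmx_idem. Qed.

Lemma in_perp_P n (e : rel 'I_n) (W : {set 'I_n}) x :
  in_perp e W x -> x *m adjmx e *m spanmx W = 0.
Proof.
move=> hx; apply/matrixP=> i j; rewrite (ord1 i) [RHS]mxE -rowv_entry.
have hs : in_span W (bvec j *m spanmx W) by apply: submxMl.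
move/forallP: hx => /(_ (bvec j *m spanmx W)) /implyP /(_ hs) /eqP.
by rewrite /formE trmx_mul spanmx_tr mulmxA.
Qed.

Lemma perp_partP n (e : rel 'I_n) (W : {set 'I_n}) x : reducible e W ->
  in_perp e W (perp_part e W x) /\ in_span W (x - perp_part e W x).
Proof.
move=> HW; rewrite /perp_part; case: pickP => [y /andP[h1 h2]|H] //.
exfalso; have [a [b [ha hb hx]]] := HW x.
by move: (H b); rewrite hb hx addrK ha.
Qed.

Unset Implicit Arguments.
Theorem mainTheorem5 (n : nat) (e : rel 'I_n) (He : symmetric e)
  (W : {set 'I_n}) (HW : reducible e W) (v w : 'I_n)
  (Hv : v \notin W) (Hw : w \notin W) :
  (gammaW_edge e W v w = (rankG e W W < rankG e (v |: W) (w |: W))%N) /\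
  (\det (sqsubmxG e W W) != 0 ->
     gammaW_edge e W v w = (\det (sqsubmxG e (v |: W) (w |: W)) != 0)).
Proof.
set P := spanmx W; set A := adjmx e; set u := bvec v; set z := bvec w.
have [hx1 hx2] := perp_partP u HW.
have [hy1 hy2] := perp_partP z HW.
set x' := perp_part e W u in hx1 hx2.
set y' := perp_part e W z in hy1 hy2.
have hux : u - (u - x') = x' by rewrite opprB addrC subrK.
have huy : z - (z - y') = y' by rewrite opprB addrC subrK.
have hrank : rankG e (v |: W) (w |: W) =
   \rank ((P *m A *m P + ((u - (u - x')) *m A *m (z - (z - y'))^T) 0 0 *: (u^T *m z))%R).
  rewrite rankG_span (spanmxU1 Hv) (spanmxU1 Hw); apply: keyM.
  - exact: adjmx_tr.
  - exact: spanmx_tr.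
  - exact: spanmx_idem.
  - exact: bvec_notin.
  - exact: bvec_notin.
  - exact: in_span_P.
  - exact: in_span_P.
  - by rewrite hux; apply: in_perp_P.
  - by rewrite huy; apply: in_perp_P.
set c := ((u - (u - x')) *m A *m (z - (z - y'))^T) 0 0 in hrank.
have hg : gammaW_edge e W v w = (c == 1).
  by rewrite /gammaW_edge Hv Hw /formEW /formE /c hux huy.
have hW : rankG e W W = \rank (P *m A *m P) by rewrite rankG_span.
have hD : u^T *m z = delta_mx v w by rewrite /u /z /bvec trmx_delta mul_delta_mx.
have huP : u *m P = 0 by apply: bvec_notin.
have hzP : z *m P = 0 by apply: bvec_notin.
have hr : rankG e (v |: W) (w |: W) = (\rank (P *m A *m P) + (c == 1%R))%N.
  rewrite hrank hD; case: (F2c c) => ->; first by rewrite scale0r addr0 addn0.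
  rewrite scale1r addn1; apply: (@rankKD n (P *m A *m P) P v w).
  - by rewrite -mulmxA spanmx_idem.
  - by rewrite !mulmxA spanmx_idem.
  - by rewrite -hD -mulmxA hzP mulmx0.
  - by rewrite -hD mulmxA -[P]spanmx_tr -trmx_mul huP trmx0 mul0mx.
  - have hQ : delta_mx v v = u^T *m u by rewrite /u /bvec trmx_delta mul_delta_mx.
    by rewrite hQ !mulmxA -(mulmxA _ u) huP mulmx0 !mul0mx.
have HXY : #|v |: W| = #|w |: W| by rewrite !cardsU1 Hv Hw.
split.
  by rewrite hg hr hW; case: (c == 1); rewrite ?addn1 ?addn0 ?ltnSn ?ltnn.
move=> hdet.
have hdetE : forall (X Y : {set 'I_n}) (H : #|X| = #|Y|),
    (\det (sqsubmxG e X Y) != 0) = (\rank (spanmx X *m A *m spanmx Y) == #|X|).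
  by move=> X Y H; rewrite -unitfE -unitmxE -row_free_unit /row_free (@rank_sqsub _ e X Y H).
move: hdet; rewrite (hdetE _ _ erefl) (hdetE _ _ HXY) -!rankG_span hr hW => /eqP ->.
rewrite hg cardsU1 Hv add1n.
by case: (c == 1); rewrite ?addn1 ?addn0 ?eqxx // eq_sym (gtn_eqF (ltnSn _)).
Qed.
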